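(* Let $\mathcal{G}=(V,\mathit{Act},\mathcal{R})$ be a normed BPA system and $\gamma,\delta\in V^*$ with $R_\gamma=R_\delta$. Then for every $A\in V$ we have $R_{A\gamma}=R_{A\delta}$, and for all $\alpha,\beta\in V^*$ we have $\alpha\gamma\sim\beta\gamma$ iff $\alpha\delta\sim\beta\delta$. Moreover, for each $A\in V$ and $\gamma\in V^*$, the set of strings $\alpha\in V^*$ such that (a) $\alpha\gamma\sim A\gamma$ and (b) $\alpha$ is a redundancy-free prefix of $\alpha\gamma$ is finite and nonempty, and it depends only on $R_\gamma$ (not on $\gamma$ itself). Consequently the canonical transducer $\mathcal{T}^\mathcal{G}$ is well defined.
   Context: A BPA system $\mathcal{G}=(V,\mathit{Act},\mathcal{R})$: finite variables $V$, finite actions (possibly containing silent $\tau$), rules $A\xrightarrow{a}\alpha$; LTS $\mathcal{L}_\mathcal{G}$ on $V^*$ with $A\beta\xrightarrow{a}\alpha\beta$ for rules $A\xrightarrow{a}\alpha$. Normed: each variable can reach $\varepsilon$. $\sim$ is branching bisimilarity in $\mathcal{L}_\mathcal{G}$ (largest relation $\mathcal{B}$ such that for $(s,t)\in\mathcal{B}$ each move $s\xrightarrow{a}s'$ is matched by $a=\tau$ with $(s',t)\in\mathcal{B}$, or by $t=t_0\xrightarrow{\tau}\cdots\xrightarrow{\tau}t_k\xrightarrow{a}t'$ with $(s',t')\in\mathcal{B}$, $(s,t_i)\in\mathcal{B}$ for $i\in[1,k]$; and symmetrically). $R_\gamma=\{X\in V\mid X\gamma\sim\gamma\}$. The prefix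 $\alpha$ of $\alpha\gamma$ is redundancy-free if it cannot be written as $\alpha=\delta X\beta$ with $X\beta\gamma\sim\beta\gamma$. Fix a linear order on $V$; $\alpha$ is lexicographically smaller than $\beta$ if $\alpha$ is a proper suffix of $\beta$, or $\alpha=\alpha'A\gamma$, $\beta=\beta'B\gamma$ with $A<B$. The canonical transducer $\mathcal{T}^\mathcal{G}=(Q,V,\Delta,q_0)$: $Q=\{R_\gamma\mid\gamma\in V^*\}$, $q_0=R_\varepsilon$, and $\Delta(R_\gamma,A)=(R_{A\gamma},\alpha)$ where $\alpha$ is the lexicographically smallest among the longest strings satisfying (a) and (b) above. *)

(* Defs.v *)
From mathcomp Require Import all_boot.
Set Implicit Arguments. Unset Strict Implicit. Unset Printing Implicit Defensive.

(* A BPA system G = (V, Act, R): V and Act are finite types; the action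
   alphabet is [option Act], where [None] denotes the silent action tau. *)
Definition rule (V Act : finType) := (V * option Act * seq V)%type.

Section BPA.
Variables (V Act : finType) (R : seq (rule V Act)).

Definition step (s : seq V) (a : option Act) (t : seq V) : Prop :=
  exists X beta alpha, s = X :: beta /\ (X, a, alpha) \in R /\ t = alpha ++ beta.

Inductive reaches : seq V -> seq V -> Prop :=
| reaches_refl s : reaches s s
| reaches_step s a s' t : step s a s' -> reaches s' t -> reaches s t.

Definition normed : Prop := forall X : V, reaches [:: X] [::].

Inductive tau_path (B : seq V -> seq V -> Prop) (s : seq V) :
  seq V -> seq V -> Prop :=
| tau_path_refl t : tau_path B s t t
| tau_path_step t t1 u : step t None t1 -> B s t1 -> tau_path B s t1 u ->
                         tau_path B s t u.

Definition bb_half (B : seq V -> seq V -> Prop) : Prop :=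
  forall s t, B s t -> forall a s', step s a s' ->
    (a = None /\ B s' t) \/
    (exists u t', tau_path B s t u /\ step u a t' /\ B s' t').

Definition is_bbisim (B : seq V -> seq V -> Prop) : Prop :=
  bb_half B /\ bb_half (fun x y => B y x).

Definition bbisim (s t : seq V) : Prop :=
  exists B, is_bbisim B /\ B s t.

Definition Rset (gamma : seq V) (X : V) : Prop := bbisim (X :: gamma) gamma.

Definition sameR (gamma delta : seq V) : Prop :=
  forall X, Rset gamma X <-> Rset delta X.

Definition redfree (alpha gamma : seq V) : Prop :=
  ~ (exists d X beta, alpha = d ++ X :: beta /\
                      bbisim (X :: beta ++ gamma) (beta ++ gamma)).

Definition Sset (A : V) (gamma alpha : seq V) : Prop :=
  bbisim (alpha ++ gamma) (A :: gamma) /\ redfree alpha gamma.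

Definition lexlt (lt : rel V) (alpha beta : seq V) : Prop :=
  (exists p, p != [::] /\ beta = p ++ alpha) \/
  (exists a' b' A B g, alpha = a' ++ A :: g /\ beta = b' ++ B :: g /\ lt A B).

Definition strict_total (lt : rel V) : Prop :=
  irreflexive lt /\ transitive lt /\ (forall x y, x != y -> lt x y || lt y x).

Definition canon (lt : rel V) (A : V) (gamma alpha : seq V) : Prop :=
  Sset A gamma alpha /\
  (forall beta, Sset A gamma beta -> size beta <= size alpha) /\
  (forall beta, Sset A gamma beta -> size beta = size alpha -> beta <> alpha ->
                lexlt lt alpha beta).

End BPA.

(* Main.v *)
Require Import Defs.
From mathcomp Require Import all_boot zify.
From Stdlib Require Import Classical.
Set Implicit Arguments. Unset Strict Implicit. Unset Printing Implicit Defensive.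

Section Basics.
Variables (V Act : finType) (R : seq (rule V Act)).

Notation step := (step R).
Notation bbisim := (bbisim R).
Notation tau_path := (tau_path R).
Notation bb_half := (bb_half R).
Notation is_bbisim := (is_bbisim R).

Lemma step_nil a t : ~ step [::] a t.
Proof. by case=> X [b [al [E _]]]. Qed.

Lemma step_cons X b a t : step (X :: b) a t <-> exists rho, (X, a, rho) \in R /\ t = rho ++ b.
Proof.
split.
- case=> Y [b' [al [[-> ->] [H ->]]]]. by exists al.
- case=> rho [H ->]. by exists X, b, rho.
Qed.

Lemma step_app s a s' g : step s a s' -> step (s ++ g) a (s' ++ g).
Proof. case=> X [b [al [-> [H ->]]]]. exists X, (b ++ g), al. by rewrite catA. Qed.

Lemma tau_path_mono (B B' : seq V -> seq V -> Prop) s t u :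
  (forall x, B s x -> B' s x) -> tau_path B s t u -> tau_path B' s t u.
Proof.
move=> HB; elim=> [t0|t0 t1 u0 H1 H2 _ IH]; first exact: tau_path_refl.
exact: tau_path_step H1 (HB _ H2) IH.
Qed.

Lemma tau_path_mono2 (B B' : seq V -> seq V -> Prop) s s' t u :
  (forall x, B s x -> B' s' x) -> tau_path B s t u -> tau_path B' s' t u.
Proof.
move=> HB; elim=> [t0|t0 t1 u0 H1 H2 _ IH]; first exact: tau_path_refl.
exact: tau_path_step H1 (HB _ H2) IH.
Qed.

Lemma tau_path_cat B s t w v : tau_path B s t w -> tau_path B s w v -> tau_path B s t v.
Proof.
elim=> [//|t0 t1 u0 H1 H2 _ IH] H. exact: tau_path_step H1 H2 (IH H).
Qed.

Lemma tau_path_last B s t t1 : tau_path B s t t1 ->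
  t1 = t \/ exists w, tau_path B s t w /\ step w None t1 /\ B s t1.
Proof.
elim=> [t0|t0 t2 u0 H1 H2 _ [->|[w [Hw [Hs HB]]]]]; first by left.
- right; exists t0; split; [constructor| by split].
- right; exists w; split=> //. exact: tau_path_step H1 H2 Hw.
Qed.

Lemma tau_path_end B s t u : tau_path B s t u -> B s t -> B s u.
Proof. by elim=> // t0 t1 u0 _ H2 _ IH _; apply: IH. Qed.

Lemma tau_path_nil B s u : tau_path B s [::] u -> u = [::].
Proof. move=> H; inversion H => //; subst; exfalso; exact: step_nil H0. Qed.

Lemma bb_half_ext (B B' : seq V -> seq V -> Prop) :
  (forall x y, B x y <-> B' x y) -> bb_half B -> bb_half B'.
Proof.
move=> E H s t /E Hst a s' Hs.
case: (H s t Hst a s' Hs) => [[Ha HB]|[u [t' [Hp [Hu HB]]]]].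
- by left; split=> //; apply/E.
- right; exists u, t'; split; last by split=> //; apply/E.
  by apply: tau_path_mono Hp => x /E.
Qed.

Lemma bbisim_refl s : bbisim s s.
Proof.
exists (fun x y => x = y); split=> //; split.
- move=> x y -> a s' Hs; right; exists y, s'; split; [constructor| by []].
- move=> x y <- a s' Hs; right; exists y, s'; split; [constructor| by []].
Qed.

Lemma bbisim_sym s t : bbisim s t -> bbisim t s.
Proof.
case=> B [[H1 H2] Hst]; exists (fun x y => B y x); split=> //; split=> //.
Qed.

Definition comp (B1 B2 : seq V -> seq V -> Prop) x z := exists y, B1 x y /\ B2 y z.

Lemma path_transfer B1 B2 s m t u1 : bb_half B2 ->
  tau_path B1 s m u1 -> B1 s m -> B2 m t ->
  exists t1, tau_path (comp B1 B2) s t t1 /\ B2 u1 t1.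
Proof.
move=> H2 Hp; elim: Hp t => [m0 t _ H|m0 m1 u0 Hs Hm1 _ IH t Hsm H].
- exists t; split=> //; exact: tau_path_refl.
- case: (H2 _ _ H _ _ Hs) => [[_ Hm1t]|[w [t'' [Hw [Hwt Ht'']]]]].
  + exact: IH.
  + case: (IH t'' Hm1 Ht'') => t1 [Hp1 Hu1].
    exists t1; split=> //.
    apply: tau_path_cat (tau_path_mono2 _ Hw) _.
    * by move=> x Hx; exists m0.
    * apply: tau_path_step Hwt _ Hp1. by exists m1.
Qed.

Lemma comp_half B1 B2 : bb_half B1 -> bb_half B2 -> bb_half (comp B1 B2).
Proof.
move=> H1 H2 s t [m [Hsm Hmt]] a s' Hs.
case: (H1 _ _ Hsm _ _ Hs) => [[Ha Hs'm]|[u1 [m' [Hp [Hu1 Hs'm']]]]].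
- by left; split=> //; exists m.
- case: (path_transfer H2 Hp Hsm Hmt) => t1 [Hp1 Hu1t1].
  have Hsu1 : B1 s u1 := tau_path_end Hp Hsm.
  case: (H2 _ _ Hu1t1 _ _ Hu1) => [[Ha Hm't1]|[v [t' [Hv [Hvt Ht']]]]].
  + case: (tau_path_last Hp1) => [Et1|[w [Hw [Hwt1 _]]]].
    * by left; split=> //; exists m'; rewrite -Et1.
    * right; exists w, t1; split=> //; split; first by rewrite Ha.
      by exists m'.
  + right; exists v, t'; split; last by split=> //; exists m'.
    apply: tau_path_cat Hp1 _.
    apply: tau_path_mono2 Hv => x Hx; by exists u1.
Qed.

Lemma bbisim_trans s t u : bbisim s t -> bbisim t u -> bbisim s u.
Proof.
case=> B1 [[H1 H1'] Hst]; case=> B2 [[H2 H2'] Htu].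
exists (comp B1 B2); split; last by exists t.
split; first exact: comp_half.
apply: bb_half_ext (comp_half H2' H1').
move=> x y; split; case=> z [? ?]; by exists z.
Qed.

Lemma bbisim_half : bb_half bbisim.
Proof.
move=> s t [B [[H1 H2] Hst]] a s' Hs.
case: (H1 _ _ Hst _ _ Hs) => [[Ha HB]|[u [t' [Hp [Hu HB]]]]].
- by left; split=> //; exists B.
- right; exists u, t'; split; last by split=> //; exists B.
  apply: tau_path_mono Hp => x Hx; by exists B.
Qed.

Lemma half_is_bbisim (B : seq V -> seq V -> Prop) :
  (forall x y, B x y -> B y x) -> bb_half B -> forall x y, B x y -> bbisim x y.
Proof.
move=> Hsym H x y Hxy; exists B; split=> //; split=> //.
by apply: bb_half_ext H => p q; split; apply: Hsym.
Qed.

Lemma bbisim_cat_l a g d : bbisim g d -> bbisim (a ++ g) (a ++ d).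
Proof.
move=> Hgd.
pose RC x y := exists a g d, bbisim g d /\ x = a ++ g /\ y = a ++ d.
have Hsym : forall x y, RC x y -> RC y x.
  by move=> x y [a' [g' [d' [H [-> ->]]]]]; exists a', d', g'; split=> //; apply: bbisim_sym.
apply: (half_is_bbisim Hsym); last by exists a, g, d.
move=> x y [[|X a'] [g' [d' [H [-> ->]]]]] b x' Hs /=.
- case: (bbisim_half H Hs) => [[Hb HB]|[u [t' [Hp [Hu HB]]]]].
  + by left; split=> //; exists [::], x', d'.
  + right; exists u, t'; split; last by split=> //; exists [::], x', t'.
    apply: tau_path_mono Hp => z Hz; by exists [::], g', z.
- move/step_cons: Hs => [rho [Hr ->]].
  right; exists (X :: a' ++ d'), (rho ++ a' ++ d'); split; first exact: tau_path_refl.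
  split; first by apply/step_cons; exists rho.
  by exists (rho ++ a'), g', d'; rewrite -!catA.
Qed.


Notation reaches := (reaches R).

Lemma reaches_trans s t u : reaches s t -> reaches t u -> reaches s u.
Proof. elim=> // s0 a s' t0 H _ IH Hu; exact: reaches_step H (IH Hu). Qed.

Lemma reaches_app s t g : reaches s t -> reaches (s ++ g) (t ++ g).
Proof.
elim=> [s0|s0 a s' t0 H _ IH]; first exact: reaches_refl.
exact: reaches_step (step_app g H) IH.
Qed.

Lemma reaches_all : normed R -> forall s, reaches s [::].
Proof.
move=> HN; elim=> [|X s IH]; first exact: reaches_refl.
apply: reaches_trans IH. exact: (reaches_app s (HN X)).
Qed.

Inductive creach : seq V -> seq V -> nat -> Prop :=
| cr_refl s : creach s s 0
| cr_inert s s' t n : step s None s' -> bbisim s s' -> creach s' t n -> creach s t n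
| cr_step s a s' t n : step s a s' -> creach s' t n -> creach s t n.+1.

Lemma creach_trans s t u n m : creach s t n -> creach t u m -> creach s u (n + m).
Proof.
elim=> [//|s0 s' t0 n0 H1 H2 _ IH Hu|s0 a s' t0 n0 H1 _ IH Hu].
- exact: cr_inert H1 H2 (IH Hu).
- rewrite addSn; exact: cr_step H1 (IH Hu).
Qed.

Lemma creach0 s t n : creach s t n -> n = 0 -> bbisim s t.
Proof.
elim=> [s0 _|s0 s' t0 n0 H1 H2 _ IH E|//]; first exact: bbisim_refl.
exact: bbisim_trans H2 (IH E).
Qed.

Lemma creach_split b g n : creach (b ++ g) [::] n ->
  exists n1 n2, n = n1 + n2 /\ creach (b ++ g) g n1 /\ creach g [::] n2.
Proof.
move=> H; remember (b ++ g) as s eqn:Es; remember [::] as e eqn:Ee.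
elim: H b Es Ee => [s0|s0 s' t0 n0 H1 H2 H3 IH|s0 a s' t0 n0 H1 H3 IH] b Es Ee.
- rewrite Ee in Es; case: b Es => [|X b] /= Es; last by [].
  by subst; exists 0, 0; split=> //; split; constructor.
- case: b Es => [|X b] /= Es.
  + subst; exists 0, n0; split=> //; split; first constructor.
    exact: cr_inert H1 H2 H3.
  + subst; move/step_cons: H1 => [rho [Hr Es']].
    case: (IH (rho ++ b)) => //; first by rewrite -catA.
    move=> n1 [n2 [-> [Ha Hb]]]; exists n1, n2; split=> //; split=> //.
    apply: cr_inert Ha => //. by apply/step_cons; exists rho.
- case: b Es => [|X b] /= Es.
  + subst; exists 0, n0.+1; split=> //; split; first constructor.
    exact: cr_step H1 H3.
  + subst; move/step_cons: H1 => [rho [Hr Es']].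
    case: (IH (rho ++ b)) => //; first by rewrite -catA.
    move=> n1 [n2 [-> [Ha Hb]]]; exists n1.+1, n2; split=> //; split=> //.
    apply: (cr_step (a := a)) Ha. by apply/step_cons; exists rho.
Qed.

Lemma reaches_creach s t : reaches s t -> exists L, creach s t L.
Proof.
elim=> [s0|s0 a s' t0 H _ [L HL]]; first by exists 0; constructor.
by exists L.+1; exact: cr_step H HL.
Qed.

Lemma bbisim_nil_step t a t1 : bbisim t [::] -> step t a t1 -> a = None /\ bbisim t1 [::].
Proof.
move=> H Hs; case: (bbisim_half H Hs) => // [[u [t' [Hp [Hu _]]]]].
by rewrite (tau_path_nil Hp) in Hu; case: (step_nil Hu).
Qed.

Lemma bbisim_nil_creach : normed R -> forall t, bbisim t [::] -> creach t [::] 0.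
Proof.
move=> HN t Ht; have H := reaches_all HN t.
have : forall e, reaches t e -> e = [::] -> bbisim t [::] -> creach t [::] 0.
  move=> e; elim=> [s0 -> _|s0 a s' t0 Hs _ IH Ee Hs0]; first by constructor.
  case: (bbisim_nil_step Hs0 Hs) => Ha Hs'. subst a.
  apply: cr_inert Hs _ (IH Ee Hs').
  exact: bbisim_trans Hs0 (bbisim_sym Hs').
by move/(_ _ H erefl Ht).
Qed.

Lemma tau_path_creach s t u : tau_path bbisim s t u -> bbisim s t -> creach t u 0.
Proof.
elim=> [t0 _|t0 t1 u0 H1 H2 _ IH Ht]; first by constructor.
apply: cr_inert H1 _ (IH H2). exact: bbisim_trans (bbisim_sym Ht) H2.
Qed.

Lemma norm_transfer : normed R -> forall s t n, bbisim s t -> creach s [::] n ->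
  exists m, m <= n /\ creach t [::] m.
Proof.
move=> HN s t n Hst H; remember [::] as e eqn:Ee.
elim: H t Hst Ee => [s0|s0 s' t0 n0 H1 H2 _ IH|s0 a s' t0 n0 H1 _ IH] t Hst Ee.
- subst; exists 0; split=> //; exact: (bbisim_nil_creach HN (bbisim_sym Hst)).
- apply: IH Ee. exact: bbisim_trans (bbisim_sym H2) Hst.
- case: (bbisim_half Hst H1) => [[Ha Hs't]|[u [t' [Hp [Hu Ht']]]]].
  + case: (IH t Hs't Ee) => m [Hm Hc]; exists m; split=> //; lia.
  + case: (IH t' Ht' Ee) => m [Hm Hc]; exists m.+1; split; first lia.
    have := creach_trans (tau_path_creach Hp Hst) (cr_step Hu Hc). by [].
Qed.

Lemma ex_min (P : nat -> Prop) : (exists n, P n) -> exists k, P k /\ forall n, P n -> k <= n.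
Proof.
case=> n; elim: n {-2}n (leqnn n) => [|N IH] n Hn Pn.
- exists n; split=> // m _; have -> : n = 0 by lia. by [].
- case: (classic (exists m, m < n /\ P m)) => [[m [Hm Pm]]|Hno].
  + apply: (IH m) => //; lia.
  + exists n; split=> // m Pm; case: (leqP n m) => // Hm.
    by exfalso; apply: Hno; exists m.
Qed.

Lemma norm_min : normed R -> forall g, exists k, creach g [::] k /\ forall n, creach g [::] n -> k <= n.
Proof.
move=> HN g; apply: ex_min; exact: reaches_creach (reaches_all HN g).
Qed.

Lemma cons_red : normed R -> forall X a g, bbisim (X :: a ++ g) g -> bbisim (a ++ g) g.
Proof.
move=> HN X a g H.
case: (norm_min HN g) => k [Hk Hmin].
case: (norm_transfer HN (bbisim_sym H) Hk) => m [Hm Hc].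
case: (creach_split (b := [:: X]) Hc) => n1 [n2 [E [_ H2]]].
case: (creach_split H2) => q1 [q2 [E2 [H3 H4]]].
have := Hmin _ H4 => Hq2.
apply: (creach0 H3); lia.
Qed.

Lemma redfree_tail X b g : redfree R (X :: b) g -> redfree R b g.
Proof.
move=> H [d [Y [c [E Hb]]]]; apply: H; exists (X :: d), Y, c; split=> //. by rewrite E.
Qed.

Lemma redfree_bound : normed R -> forall g k, (forall n, creach g [::] n -> k <= n) ->
  forall a n, redfree R a g -> creach (a ++ g) [::] n -> size a + k <= n.
Proof.
move=> HN g k Hmin; elim=> [|X a IH] n Hr Hc; first exact: Hmin.
case: (creach_split (b := [:: X]) Hc) => n1 [n2 [E [H1 H2]]].
have := IH _ (redfree_tail Hr) H2 => Hn2.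
case: n1 E H1 => [|n1] E H1.
- exfalso; apply: Hr; exists [::], X, a; split=> //. exact: (creach0 H1 erefl).
- rewrite /=; lia.
Qed.

Lemma Sset_bound : normed R -> forall A g, exists L, forall a, Sset R A g a -> size a <= L.
Proof.
move=> HN A g; case: (reaches_creach (reaches_app g (HN A))) => L HL.
exists L => a [Hb Hr].
case: (norm_min HN g) => k [Hk Hmin].
have HA := creach_trans HL Hk.
case: (norm_transfer HN (bbisim_sym Hb) HA) => m [Hm Hc].
have := redfree_bound HN Hmin Hr Hc. lia.
Qed.


Lemma degen : normed R -> forall g d, sameR R g d ->
  forall a, bbisim (a ++ g) g -> bbisim (a ++ d) d.
Proof.
move=> HN g d Hgd; elim=> [_|X a IH H]; first exact: bbisim_refl.
have Ha := cons_red HN H.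
have Hd := IH Ha.
have HX : bbisim (X :: g) g.
  apply: bbisim_trans (bbisim_sym (bbisim_cat_l [:: X] Ha)) H.
have HXd : bbisim (X :: d) d by apply/(Hgd X).
exact: bbisim_trans (bbisim_cat_l [:: X] Hd) HXd.
Qed.

Definition BC g d x y := bbisim x y \/ exists a b, x = a ++ d /\ y = b ++ d /\
  bbisim (a ++ g) (b ++ g) /\ ~ bbisim (a ++ g) g /\ ~ bbisim (b ++ g) g.

Lemma BC_pair : normed R -> forall g d, sameR R g d ->
  forall p q, bbisim (p ++ g) (q ++ g) -> BC g d (p ++ d) (q ++ d).
Proof.
move=> HN g d Hgd p q H.
case: (classic (bbisim (p ++ g) g)) => Hp.
- left; apply: bbisim_trans (degen HN Hgd Hp) _.
  apply: bbisim_sym; apply: (degen HN Hgd).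
  exact: bbisim_trans (bbisim_sym H) Hp.
- right; exists p, q; split=> //; split=> //; split=> //; split=> // Hq.
  by apply: Hp; apply: bbisim_trans H Hq.
Qed.

Lemma mirror : normed R -> forall g d, sameR R g d ->
  forall s a t u, tau_path bbisim s t u -> forall b, t = b ++ g -> s = a ++ g ->
  ~ bbisim s g -> b <> [::] ->
  exists b', u = b' ++ g /\ b' <> [::] /\ tau_path (BC g d) (a ++ d) (b ++ d) (b' ++ d).
Proof.
move=> HN g d Hgd s a t u; elim=> [t0|t0 t1 u0 H1 H2 _ IH] b Et Es Hs Hb.
- exists b; split=> //; split=> //; constructor.
- case: b Hb Et => [//|Y b1] _ Et; rewrite Et in H1.
  move/step_cons: H1 => [rho [Hr Et1]].
  have Ht1 : ~ bbisim t1 g by move=> Hc; apply: Hs; apply: bbisim_trans H2 Hc.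
  have Hne : rho ++ b1 <> [::].
    move=> E; apply: Ht1; rewrite Et1 catA E /=; exact: bbisim_refl.
  case: (IH (rho ++ b1)) => //; first by rewrite -catA.
  move=> b' [Eu [Hb' Hp]]; exists b'; split=> //; split=> //.
  apply: tau_path_step Hp.
  + by apply/step_cons; exists rho; rewrite -catA.
  + apply: BC_pair => //. rewrite -catA -Et1 -Es. exact: H2.
Qed.

Lemma BC_half : normed R -> forall g d, sameR R g d -> bb_half (BC g d).
Proof.
move=> HN g d Hgd x y [Hxy|[a [b [-> [-> [Hab [Ha Hb]]]]]]] c x' Hs.
- case: (bbisim_half Hxy Hs) => [[Hc HB]|[u [t' [Hp [Hu HB]]]]].
  + by left; split=> //; left.
  + right; exists u, t'; split; last by split=> //; left.
    by apply: tau_path_mono Hp => z Hz; left.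
- case: a Ha Hab Hs => [|X a1] Ha Hab Hs.
  + by exfalso; apply: Ha; exact: bbisim_refl.
  move/step_cons: Hs => [rho [Hr ->]].
  have Hs' : step (X :: a1 ++ g) c (rho ++ a1 ++ g) by apply/step_cons; exists rho.
  case: (bbisim_half Hab Hs') => [[Hc HB]|[u [t' [Hp [Hu HB]]]]].
  + left; split=> //. rewrite catA; apply: BC_pair => //. by rewrite -catA.
  + have Hbne : b <> [::] by move=> E; apply: Hb; rewrite E; exact: bbisim_refl.
    case: (mirror HN Hgd Hp erefl erefl Ha Hbne) => b' [Eu [Hb' Hp']].
    case: b' Eu Hb' Hp' => [//|Y b1] Eu _ Hp'; rewrite Eu in Hu.
    move/step_cons: Hu => [rho' [Hr' Et']].
    right; exists (Y :: b1 ++ d), (rho' ++ b1 ++ d); split=> //; split.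
    * by apply/step_cons; exists rho'.
    * rewrite catA [rho' ++ _]catA; apply: BC_pair => //.
      by rewrite -!catA -Et'.
Qed.

Lemma BC_sym g d x y : BC g d x y -> BC g d y x.
Proof.
case=> [H|[a [b [-> [-> [H [Ha Hb]]]]]]]; first by left; apply: bbisim_sym.
right; exists b, a; do !split=> //; exact: bbisim_sym.
Qed.

Lemma core : normed R -> forall g d, sameR R g d ->
  forall a b, bbisim (a ++ g) (b ++ g) -> bbisim (a ++ d) (b ++ d).
Proof.
move=> HN g d Hgd a b H.
apply: (half_is_bbisim (@BC_sym g d) (BC_half HN Hgd)).
exact: BC_pair.
Qed.

End Basics.


Section Lex.
Variables (V : finType) (lt : rel V).

Fixpoint rlex (s t : seq V) : bool :=
  match s, t with
  | x :: s', y :: t' => lt x y || ((x == y) && rlex s' t')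
  | _, _ => false
  end.

Lemma rlex_irr : strict_total lt -> forall s, ~~ rlex s s.
Proof.
move=> [Hirr _]; elim=> [//|x s IH] /=. by rewrite Hirr eqxx /= (negbTE IH).
Qed.

Lemma rlex_trans : strict_total lt -> forall s t u, rlex s t -> rlex t u -> rlex s u.
Proof.
move=> [_ [Htr _]]; elim=> [|x s IH] [|y t] [|z u] //=.
case/orP=> [Hxy|/andP[/eqP<- Hst]]; case/orP=> [Hyz|/andP[/eqP<- Htu]].
- by rewrite (Htr _ _ _ Hxy Hyz).
- by rewrite Hxy.
- by rewrite Hyz.
- by rewrite eqxx (IH _ _ Hst Htu) orbT.
Qed.

Lemma rlex_total : strict_total lt -> forall s t, size s = size t -> s <> t ->
  rlex s t \/ rlex t s.
Proof.
move=> [_ [_ Htot]]; elim=> [|x s IH] [|y t] //= [Hsz] Hne.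
have [Exy|Nxy] := eqVneq x y.
- subst y; have Hst : s <> t by move=> E; apply: Hne; rewrite E.
  case: (IH t Hsz Hst) => H; [left|right]; by rewrite H orbT.
- case/orP: (Htot _ _ Nxy) => H; [left|right]; by rewrite H.
Qed.

Lemma rlex_ex s t : rlex s t -> exists r A B x y, s = r ++ A :: x /\ t = r ++ B :: y /\ lt A B.
Proof.
elim: s t => [|a s IH] [|b t] //= /orP[H|/andP[/eqP<- H]].
- by exists [::], a, b, s, t.
- case: (IH _ H) => r [A [B [x [y [-> [-> HAB]]]]]].
  by exists (a :: r), A, B, x, y.
Qed.

Lemma rlex_cat r A B x y : lt A B -> rlex (r ++ A :: x) (r ++ B :: y).
Proof. move=> H; elim: r => [|z r IH] /=; first by rewrite H. by rewrite eqxx IH orbT. Qed.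

Lemma rev_split (a' : seq V) A g : rev (a' ++ A :: g) = rev g ++ A :: rev a'.
Proof. by rewrite rev_cat rev_cons cat_rcons. Qed.

Lemma lexlt_rlex a b : lexlt lt a b -> size a = size b -> rlex (rev a) (rev b).
Proof.
case=> [[p [Hp ->]] Hs|[a' [b' [A [B [g [-> [-> H]]]]]]] _].
- exfalso; move: Hs; rewrite size_cat; case: p Hp => // ? ? _ /=; lia.
- rewrite !rev_split; exact: rlex_cat.
Qed.

Lemma rlex_lexlt a b : rlex (rev a) (rev b) -> lexlt lt a b.
Proof.
move/rlex_ex=> [r [A [B [x [y [Ea [Eb H]]]]]]].
right; exists (rev x), (rev y), A, B, (rev r).
split; first by rewrite -[a]revK Ea rev_split.
by split=> //; rewrite -[b]revK Eb rev_split.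
Qed.

Lemma min_exists : strict_total lt -> forall M (c : seq (seq V)),
  (forall b, b \in c -> size b = M) -> c <> [::] ->
  exists m, m \in c /\ forall b, b \in c -> b <> m -> rlex (rev m) (rev b).
Proof.
move=> Hlt M; elim=> [//|x c IH] Hsz _.
case: c IH Hsz => [|y c] IH Hsz.
- exists x; split; first by rewrite inE.
  by move=> b; rewrite inE => /eqP.
- case: IH => [b Hb|//|m [Hm Hmin]]; first by apply: Hsz; rewrite inE Hb orbT.
  have Sx : size x = M by apply: Hsz; rewrite inE eqxx.
  have Sm : size m = M by apply: Hsz; rewrite inE Hm orbT.
  case: (eqVneq x m) => [Exm|Nxm].
  + exists m; split; first by rewrite inE Hm orbT.
    move=> b; rewrite inE => /orP[/eqP ->|Hb] Hbm; first by rewrite Exm in Hbm.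
    exact: Hmin.
  + have Hsz' : size (rev x) = size (rev m) by rewrite !size_rev Sx Sm.
    have Hne : rev x <> rev m by move=> E; move/eqP: Nxm; rewrite -(revK x) E revK.
    case: (rlex_total Hlt Hsz' Hne) => H.
    * exists x; split; first by rewrite inE eqxx.
      move=> b; rewrite inE => /orP[/eqP ->//|Hb] Hbx.
      have [->//|Nbm] := eqVneq b m.
      have Nbm' : b <> m by move=> E; move: Nbm; rewrite E eqxx.
      have H2 := Hmin _ Hb Nbm'. exact: (@rlex_trans Hlt (rev x) (rev m) (rev b) H H2).
    * exists m; split; first by rewrite inE Hm orbT.
      move=> b; rewrite inE => /orP[/eqP ->//|Hb] Hbm; last exact: Hmin.
Qed.
End Lex.

Section Fin.
Variable V : finType.

Fixpoint allseq n : seq (seq V) :=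
  if n is n'.+1 then [::] :: [seq x :: s | x <- enum V, s <- allseq n'] else [:: [::]].

Lemma allseq_mem n s : size s <= n -> s \in allseq n.
Proof.
elim: n s => [|n IH] [|x s] //= Hs.
rewrite inE; apply/orP; right.
apply: (allpairs_f (fun x s => x :: s)); first by rewrite mem_enum.
exact: IH.
Qed.

Lemma list_of_prop (T : eqType) (P : T -> Prop) (c : seq T) :
  exists l : seq T, forall a, (P a /\ a \in c) <-> a \in l.
Proof.
elim: c => [|x c [l Hl]]; first by exists [::] => a; split=> [[]|].
case: (classic (P x)) => Hx.
- exists (x :: l) => a; rewrite !inE; split.
  + case=> Ha /orP[->//|Hc]; apply/orP; right; apply/Hl; by split.
  + case/orP=> [/eqP->|/Hl [Ha Hc]]; first by rewrite eqxx.
    by split=> //; rewrite Hc orbT.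
- exists l => a; rewrite inE; split.
  + case=> Ha /orP[/eqP E|Hc]; first by rewrite E in Ha.
    by apply/Hl.
  + by move/Hl=> [Ha Hc]; split=> //; rewrite Hc orbT.
Qed.

Lemma ex_max (P : nat -> Prop) L : (forall n, P n -> n <= L) -> (exists n, P n) ->
  exists k, P k /\ forall n, P n -> n <= k.
Proof.
move=> HL [n Pn].
case: (ex_min (P := fun d => P (L - d))) => [|d [Pd Hd]].
- exists (L - n); have Hn := HL _ Pn.
  have E : L - (L - n) = n by lia.
  by rewrite E.
- exists (L - d); split=> // m Pm.
  have Hm := HL _ Pm.
  have E : L - (L - m) = m by lia.
  have : d <= L - m by apply: Hd; rewrite E.
  lia.
Qed.
End Fin.

Unset Implicit Arguments.

Theorem mainTheorem10 (V Act : finType) (R : seq (rule V Act)) (lt : rel V) :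
  normed R -> strict_total lt ->
  (forall gamma delta : seq V, sameR R gamma delta ->
     (forall A : V, sameR R (A :: gamma) (A :: delta)) /\
     (forall alpha beta : seq V,
        bbisim R (alpha ++ gamma) (beta ++ gamma) <->
        bbisim R (alpha ++ delta) (beta ++ delta))) /\
  (forall (A : V) (gamma : seq V),
     (exists l : seq (seq V), forall alpha, Sset R A gamma alpha <-> alpha \in l) /\
     (exists alpha, Sset R A gamma alpha)) /\
  (forall (A : V) (gamma delta : seq V), sameR R gamma delta ->
     forall alpha, Sset R A gamma alpha <-> Sset R A delta alpha) /\
  (forall (A : V) (gamma : seq V), exists! alpha, canon R lt A gamma alpha) /\
  (forall (A : V) (gamma delta : seq V), sameR R gamma delta ->
     forall alpha, canon R lt A gamma alpha <-> canon R lt A delta alpha).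
Proof.
move=> HN Hlt.
have Hcore := core HN.
have Hsym : forall g d, sameR R g d -> sameR R d g by move=> g d H X; split=> /H.
have Sinv1 : forall A g d, sameR R g d -> forall a, Sset R A g a -> Sset R A d a.
  move=> A g d H a [Hb Hr]; split; first exact: (Hcore g d H a [:: A] Hb).
  move=> [dd [X [bb [E Hx]]]]; apply: Hr; exists dd, X, bb; split=> //.
  exact: (Hcore d g (Hsym _ _ H) (X :: bb) bb Hx).
have Sinv : forall A g d, sameR R g d -> forall a, Sset R A g a <-> Sset R A d a.
  move=> A g d H a; split; [exact: Sinv1|apply: Sinv1; exact: Hsym].
have Sfin : forall A g, exists l : seq (seq V), forall a, Sset R A g a <-> a \in l.
  move=> A g; case: (Sset_bound HN A g) => L HL.
  case: (list_of_prop (Sset R A g) (allseq V L)) => l Hl.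
  exists l => a; split.
  - move=> Ha; apply/Hl; split=> //; apply: allseq_mem; exact: HL.
  - by move/Hl=> [].
have Sne : forall A g, exists a, Sset R A g a.
  move=> A g; case: (classic (bbisim R (A :: g) g)) => H.
  - exists [::]; split; first exact: bbisim_sym.
    by case=> [[|? ?] [? [? [? ?]]]].
  - exists [:: A]; split; first exact: bbisim_refl.
    move=> [dd [X [bb [E Hx]]]]; case: dd E => [|y dd] /= E.
    + case: E => EA Eb; subst; exact: H Hx.
    + case: E => _ /(congr1 size); rewrite size_cat /=; lia.
have Cuniq : forall A g a1 a2, canon R lt A g a1 -> canon R lt A g a2 -> a1 = a2.
  move=> A g a1 a2 [S1 [M1 L1]] [S2 [M2 L2]].
  have Esz : size a1 = size a2 by have := M1 _ S2; have := M2 _ S1; lia.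
  case: (classic (a1 = a2)) => // Hne; exfalso.
  have H12 := lexlt_rlex (L1 _ S2 (esym Esz) (fun E => Hne (esym E))) Esz.
  have H21 := lexlt_rlex (L2 _ S1 Esz (fun E => Hne E)) (esym Esz).
  by move: (rlex_irr Hlt (rev a1)); rewrite (rlex_trans Hlt H12 H21).
have Cex : forall A g, exists a, canon R lt A g a.
  move=> A g; case: (Sfin A g) => l Hl; case: (Sset_bound HN A g) => L HL.
  case: (ex_max (P := fun n => exists a, Sset R A g a /\ size a = n) (L := L)).
  - by move=> n [a [Ha <-]]; apply: HL.
  - by case: (Sne A g) => a Ha; exists (size a), a.
  move=> M [[a1 [Ha1 Sa1]] Hmax].
  pose c := [seq b <- l | size b == M].
  case: (min_exists Hlt (M := M) (c := c)).
  - by move=> b; rewrite mem_filter => /andP[/eqP].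
  - move=> Ec; have : a1 \in c by rewrite mem_filter Sa1 eqxx /=; apply/Hl.
    by rewrite Ec.
  move=> m [Hm Hmin]; move: (Hm); rewrite mem_filter => /andP[/eqP Sm Hml].
  exists m; split; first by apply/Hl.
  split.
  - move=> b Hb; rewrite Sm; apply: Hmax; by exists b.
  - move=> b Hb Hs Hbm; apply: rlex_lexlt; apply: Hmin.
    + by rewrite mem_filter Hs Sm eqxx /=; apply/Hl.
    + by move=> E; apply: Hbm.
split.
  move=> g d H; split.
  - move=> A X; split=> HX.
    + exact: (Hcore g d H [:: X; A] [:: A] HX).
    + exact: (Hcore d g (Hsym _ _ H) [:: X; A] [:: A] HX).
  - move=> a b; split; [exact: Hcore| apply: Hcore; exact: Hsym].
split; first by move=> A g; split; [exact: Sfin| exact: Sne].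
split; first exact: Sinv.
split.
  move=> A g; case: (Cex A g) => a Ha; exists a; split=> // a' Ha'.
  exact: Cuniq Ha Ha'.
move=> A g d H a; rewrite /canon; split.
- move=> [S1 [M1 L1]]; split; first by apply/(Sinv A g d H).
  split=> b Hb; [apply: M1| apply: L1]; by apply/(Sinv A g d H).
- move=> [S1 [M1 L1]]; split; first by apply/(Sinv A g d H).
  split=> b Hb; [apply: M1| apply: L1]; by apply/(Sinv A g d H).
Qed.
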